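(* Let $(q(\ell))_{\ell\in\mathbb{Z}}\subset\mathbb{C}$ and $(p(\ell,z))_{(\ell,z)\in\mathbb{Z}^2}\subset\mathbb{C}$ satisfy $q(\ell)=0$ for all $\ell<0$ and $p(\ell,z)=0$ for all $\ell\in\mathbb{Z}$, $z<0$. Let $r$, $\mathbb{L}$, $\ddot r$, $\ddot p_+$, $q|_{\mathbb{L}}$ and $\beta\{\ddot p_+\}$ be as in the context. Then $$q|_{\mathbb{L}}(\ell)=\sum_{z\in\mathbb{Z}}\ddot r(\ell-z)\,\beta\{\ddot p_+\}(\ell,z)\qquad(\ell\in\mathbb{Z}).$$ In particular, $q|_{\mathbb{L}}(\ell)=q(\ell)$ for all $\ell\in\mathbb{Z}$ whenever $q(\ell)=0$ for all $\ell\in\mathbb{Z}\setminus\mathbb{L}$.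
   Context: Define $r(\ell):=\sum_{z\in\mathbb{Z}}q(\ell-z)p(\ell,z)$ for $\ell\in\mathbb{Z}$ (a finite sum). Let $L_0:=\sup\{L\in\mathbb{N}_0: p(\ell,0)\neq0 \text{ for all } 0\le\ell<L\}\in\mathbb{N}_0\cup\{\infty\}$; it is assumed that $L_0\ge1$. Put $\mathbb{L}:=\{\ell\in\mathbb{Z}:0\le\ell<L_0\}$. Define $\ddot r(\ell):=\frac{r(\ell)}{p(\ell,0)}\mathbf 1_{\mathbb{L}}(\ell)$, $\ddot p_+(\ell,z):=\big(\delta_{z,0}-\frac{p(\ell,z)}{p(\ell,0)}\big)\mathbf 1_{\mathbb{L}}(\ell)$ (with $\delta_{z,0}=1$ if $z=0$ and $0$ otherwise; both quantities are $0$ for $\ell\notin\mathbb{L}$), and $q|_{\mathbb{L}}(\ell):=q(\ell)\mathbf 1_{\mathbb{L}}(\ell)$. Convolution powers of the double sequence $\ddot p_+$: $\ddot p_+^{*0}(\ell,z):=\delta_{z,0}$ and $\ddot p_+^{*j}(\ell,z):=\sum_{z_1\in\mathbb{Z}}\ddot p_+(\ell,z_1)\,\ddot p_+^{*(j-1)}(\ell-z_1,z-z_1)$ for $j\ge1$ (finite sums). Set $\beta\{\ddot p_+\}(\ell,z):=\sum_{j=0}^{\lfloor z\rfloor}\ddot p_+^{*j}(\ell,z)$ for $(\ell,z)\in\mathbb{Z}^2$ (empty sums are $0$, so this is $0$ for $z<0$). *)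

(* Defs.v *)
From HB Require Import structures.
From mathcomp Require Import all_boot all_order all_algebra.
From mathcomp Require Import complex.
From mathcomp Require Import boolp classical_sets fsbigop reals.
Set Implicit Arguments. Unset Strict Implicit. Unset Printing Implicit Defensive.
Import Order.TTheory GRing.Theory Num.Theory.
Local Open Scope ring_scope.
Local Open Scope classical_set_scope.
Local Open Scope complex_scope.

Section Defs.
Variable R : realType.
Notation C := R[i].

Definition zsum (f : int -> C) : C := \sum_(z \in [set: int]) f z.

Definition rr (q : int -> C) (p : int -> int -> C) (l : int) : C :=
  zsum (fun z => q (l - z) * p l z).

(* l \in LL  <=>  0 <= l < L_0, where
   L_0 = sup {L : nat | p(k,0) <> 0 for all 0 <= k < L} *)
Definition inLL (p : int -> int -> C) (l : int) : Prop :=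
  exists L : nat, (forall k : nat, (k < L)%N -> p k%:Z 0 != 0)
                  /\ (0 <= l) /\ (l < L%:Z).

Definition indLL (p : int -> int -> C) (l : int) : C :=
  if `[< inLL p l >] then 1 else 0.

Definition rdd (q : int -> C) (p : int -> int -> C) (l : int) : C :=
  (rr q p l / p l 0) * indLL p l.

Definition pplus (p : int -> int -> C) (l z : int) : C :=
  ((z == 0)%:R - p l z / p l 0) * indLL p l.

Definition qL (q : int -> C) (p : int -> int -> C) (l : int) : C :=
  q l * indLL p l.

Fixpoint convpow (pp : int -> int -> C) (j : nat) (l z : int) : C :=
  match j with
  | O => (z == 0)%:R
  | j'.+1 => zsum (fun z1 => pp l z1 * convpow pp j' (l - z1) (z - z1))
  end.

Definition beta (pp : int -> int -> C) (l z : int) : C :=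
  if (0 <= z) then \sum_(j < (absz z).+1) convpow pp j l z else 0.

End Defs.

(* Main.v *)
Require Import Defs.
From HB Require Import structures.
From mathcomp Require Import all_boot all_order all_algebra.
From mathcomp Require Import complex.
From mathcomp Require Import boolp classical_sets fsbigop reals.
From mathcomp Require Import zify ring.
Import Order.TTheory GRing.Theory Num.Theory.
Local Open Scope ring_scope.
Local Open Scope complex_scope.

Section H.
Variable R : realType.
Notation C := R[i].

Lemma zsum_ord (f : int -> C) (a : int) (n : nat) :
  (forall z, f z != 0 -> (a <= z) && (z < a + n%:Z)) ->
  zsum f = \sum_(i < n) f (a + i%:Z).
Proof.
move=> hf; rewrite /zsum fsbig_supp.
rewrite (fsbig_fwiden [seq a + i%:Z | i <- iota 0 n]).
- by rewrite big_map -(big_mkord xpredT (fun i => f (a + i%:Z))) /index_iota subn0.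
- move=> z [_ /= fz]; have nz : f z != 0 by apply/eqP.
  have /andP[h1 h2] := hf z nz.
  apply/mapP; exists (absz (z - a)); first by rewrite mem_iota add0n; lia.
  lia.
- rewrite map_inj_uniq ?iota_uniq // => x y /addrI; lia.
- move=> z [_ hz]; apply/eqP/negPn/negP => nz; apply: hz; split => //.
  exact/eqP.
Qed.

Lemma zsum0 (f : int -> C) : (forall z, f z = 0) -> zsum f = 0.
Proof. by move=> h; rewrite /zsum fsbig1. Qed.

Lemma zsum_nz (f : int -> C) : zsum f != 0 -> exists z, f z != 0.
Proof.
move=> h; apply/not_existsP => h2; move/eqP: h; apply; apply: zsum0 => z.
by apply/eqP/negPn/negP => nz; apply: (h2 z).
Qed.

Variables (q : int -> C) (p : int -> int -> C).
Hypothesis hq : forall l : int, l < 0 -> q l = 0.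
Hypothesis hp : forall l z : int, z < 0 -> p l z = 0.

Notation P := (pplus p).
Notation cp := (convpow P).

Lemma inLL_ge0 l : inLL p l -> 0 <= l.
Proof. by case=> L [_ []]. Qed.

Lemma inLL_p0 l : inLL p l -> p l 0 != 0.
Proof.
case=> L [hL [h0 h1]]; have -> : l = (absz l)%:Z by rewrite gez0_abs.
apply: hL; lia.
Qed.

Lemma inLL_down l k : inLL p l -> 0 <= k -> k <= l -> inLL p k.
Proof. case=> L [hL [h0 h1]] hk hkl; exists L; split => //; split => //; lia. Qed.

Lemma indT l : inLL p l -> indLL p l = 1.
Proof. by move=> h; rewrite /indLL asboolT. Qed.

Lemma indF l : ~ inLL p l -> indLL p l = 0.
Proof. by move=> h; rewrite /indLL asboolF. Qed.

Lemma pplus0 l z : z <= 0 -> P l z = 0.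
Proof.
move=> hz; rewrite /pplus; case: (pselect (inLL p l)) => h; last by rewrite indF ?mulr0.
have [->|nz] := eqVneq z 0; first by rewrite divff ?subrr ?mul0r // inLL_p0.
rewrite hp; last by rewrite lt_neqAle nz hz.
by rewrite mul0r subrr mul0r.
Qed.

Lemma pplus_supp l z : P l z != 0 -> 0 < z.
Proof. by apply: contraR; rewrite -leNgt => /pplus0 ->. Qed.

Lemma cp_supp j l z : cp j l z != 0 -> j%:Z <= z.
Proof.
elim: j l z => [|j IH] l z /=.
  by case: (eqVneq z 0) => [->|nz] //=; rewrite eqxx.
move/zsum_nz => [z1]; rewrite mulf_eq0 negb_or => /andP[/pplus_supp h1 /IH h2].
lia.
Qed.

Lemma rdd_supp l : rdd q p l != 0 -> 0 <= l.
Proof.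
rewrite /rdd; case: (pselect (inLL p l)) => h; first by move=> _; exact: inLL_ge0.
by rewrite indF // mulr0 eqxx.
Qed.

Lemma beta_supp l z : beta P l z != 0 -> 0 <= z.
Proof. by rewrite /beta; case: ifP => //; rewrite eqxx. Qed.

Lemma beta_sum l z (N : nat) : z < N%:Z -> beta P l z = \sum_(j < N) cp j l z.
Proof.
move=> hz; rewrite /beta; case: ifPn => h0.
  rewrite (big_ord_widen N (fun j => cp j l z)); last by lia.
  rewrite big_mkcond; apply: eq_bigr => j _; case: ifP => // hj.
  have: ~~ (cp j l z != 0) by apply/negP => /cp_supp; lia.
  by rewrite negbK => /eqP.
rewrite big1 // => j _.
have: ~~ (cp j l z != 0) by apply/negP => /cp_supp; lia.
by rewrite negbK => /eqP.
Qed.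

Lemma cp_sum j l z (n : nat) : z < n%:Z ->
  cp j.+1 l z = \sum_(i < n) P l i%:Z * cp j (l - i%:Z) (z - i%:Z).
Proof.
move=> hz /=; rewrite (zsum_ord _ 0 n); last first.
  move=> z1; rewrite mulf_eq0 negb_or => /andP[/pplus_supp h1 /cp_supp h2]; lia.
by apply: eq_bigr => i _; rewrite add0r.
Qed.

Definition B l := zsum (fun z => rdd q p (l - z) * beta P l z).

Lemma B_shift (m i : nat) : (i <= m)%N -> B (m%:Z - i%:Z) =
  \sum_(z < m.+1) rdd q p (m%:Z - z%:Z) * \sum_(j < m.+1) cp j (m%:Z - i%:Z) (z%:Z - i%:Z).
Proof.
move=> hi; rewrite /B (zsum_ord _ (- i%:Z) m.+1); last first.
  move=> w; rewrite mulf_eq0 negb_or => /andP[/rdd_supp h1 /beta_supp h2]; lia.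
apply: eq_bigr => z _; rewrite (beta_sum _ _ m.+1); last by have := ltn_ord z; lia.
congr (_ * _); first by congr (rdd q p _); lia.
by apply: eq_bigr => j _; rewrite (addrC (- _)).
Qed.

Lemma B_rec (m : nat) : B m%:Z = rdd q p m%:Z + \sum_(i < m.+1) P m%:Z i%:Z * B (m%:Z - i%:Z).
Proof.
have e : forall z : 'I_m.+1, rdd q p (m%:Z - (0 + z%:Z)) * beta P m%:Z (0 + z%:Z) =
   rdd q p (m%:Z - z%:Z) * (z%:Z == 0)%:R + \sum_(i < m.+1) \sum_(j < m.+1)
      P m%:Z i%:Z * (rdd q p (m%:Z - z%:Z) * cp j (m%:Z - i%:Z) (z%:Z - i%:Z)).
  move=> z; rewrite add0r (beta_sum _ _ m.+2); last by have := ltn_ord z; lia.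
  rewrite big_ord_recl /= mulrDr; congr (_ + _).
  rewrite (eq_bigr (fun j : 'I_m.+1 => \sum_(i<m.+1) P m%:Z i%:Z * cp j (m%:Z - i%:Z) (z%:Z - i%:Z))); last first.
    move=> j _; apply: (cp_sum j); have := ltn_ord z; lia.
  rewrite big_distrr /=; under eq_bigr do rewrite big_distrr /=.
  rewrite exchange_big /=; apply: eq_bigr => i _; apply: eq_bigr => j _.
  by rewrite mulrCA.
rewrite {1}/B (zsum_ord _ 0 m.+1); last first.
  move=> w; rewrite mulf_eq0 negb_or => /andP[/rdd_supp h1 /beta_supp h2]; lia.
rewrite (eq_bigr _ (fun z _ => e z)) big_split /=; congr (_ + _).
  rewrite big_ord_recl /= subr0 mulr1 big1 ?addr0 // => z _.
  by rewrite mulr0n mulr0.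
rewrite exchange_big; apply: eq_bigr => i _; rewrite B_shift; last by have := ltn_ord i; lia.
rewrite big_distrr; apply: eq_bigr => z _.
by rewrite !big_distrr.
Qed.

Lemma B_neg l : l < 0 -> B l = 0.
Proof.
move=> hl; apply: zsum0 => z.
case: (boolP (rdd q p (l - z) == 0)) => [/eqP->|/rdd_supp h1]; first by rewrite mul0r.
case: (boolP (beta P l z == 0)) => [/eqP->|/beta_supp h2]; first by rewrite mulr0.
lia.
Qed.

Lemma E_rec (m : nat) : qL q p m%:Z = rdd q p m%:Z + \sum_(i < m.+1) P m%:Z i%:Z * qL q p (m%:Z - i%:Z).
Proof.
case: (pselect (inLL p m%:Z)) => h; last first.
  rewrite /qL /rdd indF // !mulr0 add0r big1 // => i _.
  by rewrite /pplus indF // mulr0 mul0r.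
rewrite big_ord_recl pplus0 // mul0r add0r.
have hp0 := inLL_p0 _ h.
rewrite /rdd /rr (zsum_ord _ 0 m.+1); last first.
  move=> z; rewrite mulf_eq0 negb_or => /andP[h1 h2].
  have [hlt|hge] := ltP (m%:Z - z) 0; first by rewrite hq ?eqxx in h1.
  have [hz|hz] := ltP z 0; first by rewrite (hp _ _ hz) eqxx in h2.
  lia.
rewrite big_ord_recl /= add0r subr0 indT //.
rewrite [in LHS]/qL indT // mulr1.
rewrite [X in _ = _ + X](eq_bigr (fun i : 'I_m => - (q (m%:Z - (0 + (bump 0 i)%:Z)) * p m%:Z (0 + (bump 0 i)%:Z)) / p m%:Z 0)); last first.
  move=> i _; rewrite add0r /pplus /qL !indT //; last first.
    apply: inLL_down h _ _; have := ltn_ord i; rewrite /bump /=; lia.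
  have hb : ((bump 0 i)%:Z == 0) = false by [].
  rewrite hb (_ : false%:R = 0) //; field; exact: hp0.
set S := \sum_(i < m) _ * _.
rewrite [X in _ = _ + X](_ : _ = - S / p m%:Z 0); last by rewrite /S -sumrN big_distrl.
field; exact: hp0.
Qed.
End H.

Theorem theorem1 (R : realType) (q : int -> R[i]) (p : int -> int -> R[i])
  (hq : forall l : int, l < 0 -> q l = 0)
  (hp : forall l z : int, z < 0 -> p l z = 0)
  (hL0 : p 0 0 != 0) :
  (forall l : int,
     qL q p l = zsum (fun z => rdd q p (l - z) * beta (pplus p) l z))
  /\ ((forall l : int, ~ inLL p l -> q l = 0) ->
      forall l : int, qL q p l = q l).
Proof.
split; last first.
  move=> hnot l; rewrite /qL; case: (pselect (inLL p l)) => h.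
    by rewrite indT // mulr1.
  by rewrite indF // hnot // mulr0.
have hD : forall m : nat, qL q p m%:Z = B _ q p m%:Z.
  elim/ltn_ind => m IH.
  rewrite (E_rec _ _ _ hq hp) (B_rec _ _ _ hp); congr (_ + _); apply: eq_bigr => i _.
  have [->|ipos] := posnP i; first by rewrite pplus0 // !mul0r.
  rewrite subzn; last by have := ltn_ord i; lia.
  rewrite IH //; have := ltn_ord i; lia.
move=> l; change (qL q p l = B _ q p l).
have [hl|hl] := ltP l 0.
  by rewrite B_neg // /qL hq // mul0r.
by have -> : l = (absz l)%:Z by rewrite gez0_abs.
Qed.
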